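(* Let $R$ be an associative ring and let $S=\begin{pmatrix}A&B\\ C&D\end{pmatrix}$ be a non-commuting switch over $R$. Let $Q=(1-A)(1-D)$ and let $S'=\begin{pmatrix}0&1\\ Q&1-Q\end{pmatrix}$. For $n\geq 2$ let $M$ be the $n\times n$ matrix over $R$ with $M_{11}=1$, $M_{1c}=0$ for $c>1$, and for $r\geq 2$: $M_{rc}=B^{c-1}A$ for $1\le c<r$, $M_{rr}=B^{r-1}$, $M_{rc}=0$ for $c>r$ (so each row after the first starts with $A$ followed by $B$ times the previous row). Then $M$ is invertible and $\rho(S,n)=M^{-1}\rho(S',n)M$, i.e. for each $i=1,\dots,n-1$, $$I_{i-1}\oplus S\oplus I_{n-i-1}=M^{-1}\,(I_{i-1}\oplus S'\oplus I_{n-i-1})\,M.$$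
   Context: A non-commuting switch over $R$ is $S=\begin{pmatrix}A&B\\ C&D\end{pmatrix}$ where $A$, $A-1$, $B$ are invertible elements of $R$ that do not commute and satisfy the fundamental equation $A^{-1}B^{-1}AB-BA^{-1}B^{-1}A=B^{-1}AB-A$, and $C=A^{-1}B^{-1}A(1-A)$, $D=1-A^{-1}B^{-1}AB$. For a $2\times 2$ matrix $S$ over $R$, $\rho(S,n)$ is the assignment sending the standard braid generator $\sigma_i$ ($1\le i\le n-1$) to the $n\times n$ block-diagonal matrix $I_{i-1}\oplus S\oplus I_{n-i-1}$. *)

(* Defs.v *)
From HB Require Import structures.
From mathcomp Require Import all_boot all_order all_algebra.
Set Implicit Arguments. Unset Strict Implicit. Unset Printing Implicit Defensive.
Import Order.TTheory GRing.Theory.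
Local Open Scope ring_scope.

Definition mx2 (R : pzRingType) (a b c d : R) : 'M[R]_2 :=
  \matrix_(i < 2, j < 2)
     if (val i == 0%N) then (if (val j == 0%N) then a else b)
     else (if (val j == 0%N) then c else d).

Definition is_nc_switch (R : unitRingType) (A B C D : R) : Prop :=
  [/\ A \is a GRing.unit, (A - 1) \is a GRing.unit, B \is a GRing.unit
    & A * B != B * A] /\
  [/\ A^-1 * B^-1 * A * B - B * A^-1 * B^-1 * A = B^-1 * A * B - A,
      C = A^-1 * B^-1 * A * (1 - A)
    & D = 1 - A^-1 * B^-1 * A * B].

(* rho(S,n)(sigma_i) = I_{i-1} (+) S (+) I_{n-i-1}, for 1 <= i <= n-1.
   Indices j,k are 0-based: the block S occupies rows/columns i-1 and i. *)
Definition rho (R : pzRingType) (n : nat) (S : 'M[R]_2) (i : nat) : 'M[R]_n :=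
  \matrix_(j < n, k < n)
    if [&& (i.-1 <= j)%N, (j <= i)%N, (i.-1 <= k)%N & (k <= i)%N]
    then S (inord (j - i.-1)) (inord (k - i.-1))
    else (j == k)%:R.

(* The matrix M (0-based indices r, c): row 0 is (1,0,...,0); for r >= 1,
   M r c = B^c A for c < r, M r r = B^r, and 0 for c > r.
   (Paper, 1-based: M_{rc} = B^{c-1} A for c < r, M_{rr} = B^{r-1}.) *)
Definition Mmat (R : pzRingType) (A B : R) (n : nat) : 'M[R]_n :=
  \matrix_(r < n, c < n)
    if (val r == 0%N) then (val c == 0%N)%:R
    else if (c < r)%N then B ^+ c * A
    else if (val c == val r) then B ^+ r
    else 0.

(* Main.v *)
Require Import Defs.
From HB Require Import structures.
From mathcomp Require Import all_boot all_order all_algebra.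
From mathcomp Require Import zify.
Import GRing.Theory.
Local Open Scope ring_scope.

Section Blk.
Variables (R : unitRingType) (n p : nat).
Hypothesis hp : (p.+1 < n)%N.
Definition ip : 'I_n := Ordinal (ltnW hp).
Definition ii : 'I_n := Ordinal hp.

Lemma sum2 (F : 'I_n -> R) (a b : 'I_n) : a != b ->
  (forall k, k != a -> k != b -> F k = 0) -> \sum_k F k = F a + F b.
Proof.
move=> ab H; rewrite (bigD1 a) //= (bigD1 b) /=; last by rewrite eq_sym.
rewrite big1 ?addr0 // => k /andP[ka kb]; exact: H.
Qed.

Lemma rho_out_col (S : 'M[R]_2) (j k : 'I_n) :
  nat_of_ord k != p -> nat_of_ord k != p.+1 -> rho n S p.+1 j k = (j == k)%:R.
Proof.
move=> h1 h2; rewrite mxE /=; case: ifP => // /and4P[x1 x2 x3 x4]; exfalso; lia.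
Qed.
Lemma rho_out_row (S : 'M[R]_2) (j k : 'I_n) :
  nat_of_ord j != p -> nat_of_ord j != p.+1 -> rho n S p.+1 j k = (j == k)%:R.
Proof.
move=> h1 h2; rewrite mxE /=; case: ifP => // /and4P[*]; exfalso; lia.
Qed.
Lemma rho_blk (a b c d : R) (j k : 'I_n) : (p <= j <= p.+1)%N -> (p <= k <= p.+1)%N ->
  rho n (mx2 a b c d) p.+1 j k =
  if nat_of_ord j == p then (if nat_of_ord k == p then a else b) else (if nat_of_ord k == p then c else d).
Proof.
move=> hj hk; rewrite !mxE /=; case/andP: (hj) => -> ->; case/andP: (hk) => -> ->.
have [->|->] : nat_of_ord j = p \/ nat_of_ord j = p.+1 by lia.
all: have [->|->] : nat_of_ord k = p \/ nat_of_ord k = p.+1 by lia.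
all: by rewrite ?subnn ?subSnn !inordK //= ?eqxx ?(gtn_eqF (ltnSn p)).
Qed.

Lemma neq_ip (j : 'I_n) : j != ip -> (nat_of_ord j != p).
Proof. by apply: contra => /eqP h; apply/eqP/val_inj. Qed.
Lemma neq_ii (j : 'I_n) : j != ii -> (nat_of_ord j != p.+1).
Proof. by apply: contra => /eqP h; apply/eqP/val_inj. Qed.

Lemma sum_col_out (F : 'I_n -> R) S (c : 'I_n) : nat_of_ord c != p -> nat_of_ord c != p.+1 ->
  \sum_j F j * rho n S p.+1 j c = F c.
Proof.
move=> h1 h2; rewrite (bigD1 c) //= rho_out_col // eqxx mulr1 big1 ?addr0 //.
by move=> j /negbTE hj; rewrite rho_out_col // hj mulr0.
Qed.
Lemma sum_row_out (F : 'I_n -> R) S (r : 'I_n) : nat_of_ord r != p -> nat_of_ord r != p.+1 ->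
  \sum_j rho n S p.+1 r j * F j = F r.
Proof.
move=> h1 h2; rewrite (bigD1 r) //= rho_out_row // eqxx mul1r big1 ?addr0 //.
by move=> j /negbTE hj; rewrite rho_out_row // eq_sym hj mul0r.
Qed.
Lemma ipii : ip != ii.
Proof. by apply/eqP => /(congr1 val) /=; lia. Qed.

Lemma sum_col_in (F : 'I_n -> R) S (c : 'I_n) : (nat_of_ord c == p) || (nat_of_ord c == p.+1) ->
  \sum_j F j * rho n S p.+1 j c = F ip * rho n S p.+1 ip c + F ii * rho n S p.+1 ii c.
Proof.
move=> hc; apply: sum2; first exact: ipii.
move=> k /neq_ip k1 /neq_ii k2; rewrite rho_out_row //.
have -> : (k == c) = false by apply/negbTE; move: hc; apply: contraL => /eqP <-; lia.
by rewrite mulr0.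
Qed.
Lemma sum_row_in (F : 'I_n -> R) S (r : 'I_n) : (nat_of_ord r == p) || (nat_of_ord r == p.+1) ->
  \sum_j rho n S p.+1 r j * F j = rho n S p.+1 r ip * F ip + rho n S p.+1 r ii * F ii.
Proof.
move=> hr; apply: sum2; first exact: ipii.
move=> k /neq_ip k1 /neq_ii k2; rewrite rho_out_col //.
have -> : (r == k) = false by apply/negbTE; move: hr; apply: contraL => /eqP ->; lia.
by rewrite mul0r.
Qed.
Lemma mul_col_in (M : 'M[R]_n) S (r c : 'I_n) : (nat_of_ord c == p) || (nat_of_ord c == p.+1) ->
  (M *m rho n S p.+1) r c = M r ip * rho n S p.+1 ip c + M r ii * rho n S p.+1 ii c.
Proof. by move=> h; rewrite mxE; apply: sum_col_in. Qed.
Lemma mul_row_in (M : 'M[R]_n) S (r c : 'I_n) : (nat_of_ord r == p) || (nat_of_ord r == p.+1) ->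
  (rho n S p.+1 *m M) r c = rho n S p.+1 r ip * M ip c + rho n S p.+1 r ii * M ii c.
Proof. by move=> h; rewrite mxE; apply: sum_row_in. Qed.
Lemma mul_col_out (M : 'M[R]_n) S (r c : 'I_n) : ~~ ((nat_of_ord c == p) || (nat_of_ord c == p.+1)) ->
  (M *m rho n S p.+1) r c = M r c.
Proof. by rewrite negb_or => /andP[h1 h2]; rewrite mxE; apply: sum_col_out. Qed.
Lemma mul_row_out (M : 'M[R]_n) S (r c : 'I_n) : ~~ ((nat_of_ord r == p) || (nat_of_ord r == p.+1)) ->
  (rho n S p.+1 *m M) r c = M r c.
Proof. by rewrite negb_or => /andP[h1 h2]; rewrite mxE; apply: sum_row_out. Qed.
End Blk.

Section Alg.
Variables (R : unitRingType) (A B C D : R).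
Hypotheses (uA : A \is a GRing.unit) (uB : B \is a GRing.unit).
Hypothesis fund : A^-1 * B^-1 * A * B - B * A^-1 * B^-1 * A = B^-1 * A * B - A.
Hypothesis hC : C = A^-1 * B^-1 * A * (1 - A).
Hypothesis hD : D = 1 - A^-1 * B^-1 * A * B.
Let Q := (1-A)*(1-D).
Lemma QX : Q = A^-1 * B^-1 * A * B - B^-1 * A * B.
Proof.
rewrite /Q hD opprB subrKC mulrBl mul1r !mulrA mulrV // mul1r //.
Qed.
Lemma QY : Q = B * A^-1 * B^-1 * A - A.
Proof.
rewrite QX; move/eqP: fund; rewrite subr_eq => /eqP ->.
by rewrite -addrA addrC subrKA.
Qed.
Lemma alg_a : A * A + B * A * C = A.
Proof.
by rewrite hC -!mulrA (mulVKr uA) (mulVKr uB) mulrBr mulr1 addrC addrNK.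
Qed.
Lemma alg_b : A * B + B * A * D = B * A.
Proof.
by rewrite hD mulrBr mulr1 -!mulrA (mulVKr uA) (mulVKr uB) addrC addrNK.
Qed.
Lemma alg_c : Q * B = B * Q.
Proof.
rewrite {1}QY QX mulrBl mulrBr !mulrA (mulrV uB) mul1r.
by rewrite -!mulrA.
Qed.
Lemma zl (V : zmodType) (a y u x : V) : a + (y - u) = (y - x) + (x - (u - a)).
Proof. by rewrite opprB subrKA addrCA. Qed.
Lemma alg_d : A * A + B * C = Q + (1 - Q) * A.
Proof.
rewrite mulrBl mul1r QY hC !mulrA mulrBr mulr1 mulrBl.
exact: zl.
Qed.
Lemma alg_e : A * B + B * D = (1 - Q) * B.
Proof.
rewrite mulrBl mul1r hD mulrBr mulr1 QY mulrBl opprB !mulrA.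
by rewrite addrC addrA addrAC.
Qed.
End Alg.

Ltac simp_if := repeat match goal with |- context [if ?b then _ else _] =>
  first [ (have: b by lia) => ->
        | (have: b = false by apply/negbTE/negP; lia) => -> ] end.

Section Key.
Variables (R : unitRingType) (A B C D : R) (n p : nat).
Hypothesis hp : (p.+1 < n)%N.
Variable M : 'M[R]_n.
Hypothesis Mval : forall r c : 'I_n,
  M r c = if (c < r)%N then B^+c * A else if (r < c)%N then 0 else B ^+ r.
Variable Q : R.
Hypotheses (ha : A * A + B * A * C = A) (hb : A * B + B * A * D = B * A)
  (hc : Q * B = B * Q) (hd : A * A + B * C = Q + (1 - Q) * A)
  (he : A * B + B * D = (1 - Q) * B).

Lemma key : M *m rho n (mx2 A B C D) p.+1 = rho n (mx2 0 1 Q (1-Q)) p.+1 *m M.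
Proof.
apply/matrixP => r c.
have QBp : Q * B ^+ p = B ^+ p * Q by apply: commrX.
have QBp' : (1 - Q) * B ^+ p = B ^+ p * (1 - Q) by rewrite mulrBl mulrBr mul1r mulr1 QBp.
have [rin|rout] := boolP ((nat_of_ord r == p) || (nat_of_ord r == p.+1));
have [cin|cout] := boolP ((nat_of_ord c == p) || (nat_of_ord c == p.+1)).
1: rewrite (@mul_row_in _ _ _ hp) // (@mul_col_in _ _ _ hp) //.
2: rewrite (@mul_row_in _ _ _ hp) // (@mul_col_out _ _ _ hp) //.
3: rewrite (@mul_row_out _ _ _ hp) // (@mul_col_in _ _ _ hp) //.
4: rewrite (@mul_row_out _ _ _ hp) // (@mul_col_out _ _ _ hp) //.
all: rewrite ?rho_blk /=; try lia.
all: rewrite !Mval /=.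
all: first [ have [->|->] : nat_of_ord r = p \/ nat_of_ord r = p.+1 by lia
           | have [rl|rl] : (r < p)%N \/ (p.+1 < r)%N by lia ].
all: first [ have [->|->] : nat_of_ord c = p \/ nat_of_ord c = p.+1 by lia
           | have [cl|cl] : (c < p)%N \/ (p.+1 < c)%N by lia ].
all: simp_if.
all: rewrite ?mul0r ?mulr0 ?mul1r ?addr0 ?add0r //.
- by rewrite exprSr.
- rewrite exprSr -!mulrA -mulrDr hd mulrDr QBp mulrA -QBp' mulrA //.
- rewrite exprSr -!mulrA -mulrDr he mulrA -QBp' -mulrA //.
- by rewrite mulrBl mul1r subrKC.
- by rewrite exprSr -!mulrA -mulrDr [B * (A * C)]mulrA ha.
- by rewrite exprSr -!mulrA -mulrDr [B * (A * D)]mulrA hb !mulrA.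
Qed.
End Key.
Lemma block_inv (R : unitRingType) n (a : R) (c : 'M[R]_(n,1)) (M' N' : 'M[R]_n) :
  a \is a GRing.unit -> N' *m M' = 1%:M -> M' *m N' = 1%:M ->
  let X := block_mx a^-1%:M 0 (-(N' *m c *m a^-1%:M)) N' in
  X *m block_mx a%:M 0 c M' = 1%:M /\ block_mx a%:M 0 c M' *m X = 1%:M.
Proof.
move=> ua h1 h2 X; rewrite /X !mulmx_block (scalar_mx_block 1 n 1) !mul0mx !mulmx0 !addr0 !add0r.
rewrite -!scalar_mxM mulVr // mulrV // h1 h2; split; congr block_mx.
- by rewrite mulNmx -!mulmxA -scalar_mxM mulVr // mulmx1 addNr.
- by rewrite mulmxN !mulmxA h2 mul1mx addrN.
Qed.

Lemma tri_inv (R : unitRingType) n (M : 'M[R]_n) :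
  (forall i j : 'I_n, (i < j)%N -> M i j = 0) -> (forall i, M i i \is a GRing.unit) ->
  exists N : 'M[R]_n, N *m M = 1%:M /\ M *m N = 1%:M.
Proof.
elim: n M => [|n IH] M Hup Hd.
  by exists 0; split; apply/matrixP => -[].
pose M1 : 'M[R]_(1 + n) := M.
have EM : M1 = block_mx (M1 0 0)%:M 0 (dlsubmx M1) (drsubmx M1).
  rewrite -{1}[M1]submxK; congr block_mx.
    rewrite [ulsubmx M1]mx11_scalar !mxE; congr (_%:M); congr (M1 _ _); exact: val_inj.
  apply/matrixP => i j; rewrite !mxE; apply: Hup => /=; have := ltn_ord i; lia.
have [N' [h1 h2]] : exists N', N' *m drsubmx M1 = 1%:M /\ drsubmx M1 *m N' = 1%:M.
  apply: IH => [i j lij|i]; rewrite !mxE; [exact: (Hup (rshift 1 i) (rshift 1 j)) | exact: (Hd (rshift 1 i))].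
have ua : M1 0 0 \is a GRing.unit by apply: Hd.
have := @block_inv _ _ _ (dlsubmx M1) _ _ ua h1 h2; rewrite -EM => -[e1 e2].
by eexists; split; [exact: e1 | exact: e2].
Qed.

Theorem lemma2p2 (R : unitRingType) (A B C D : R) (n : nat) :
  is_nc_switch A B C D -> (2 <= n)%N ->
  let Q := (1 - A) * (1 - D) in
  let S := mx2 A B C D in
  let S' := mx2 0 1 Q (1 - Q) in
  let M := Mmat A B n in
  exists Minv : 'M[R]_n,
    [/\ Minv *m M = 1%:M, M *m Minv = 1%:M &
        forall i : nat, (1 <= i <= n.-1)%N ->
          rho n S i = Minv *m rho n S' i *m M].
Proof.
move=> [[uA uA1 uB _] [fund hC hD]] hn Q S S' M.
have Mval : forall r c : 'I_n,
    M r c = if (c < r)%N then B^+c * A else if (r < c)%N then 0 else B ^+ r.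
  { move=> r c; rewrite /M /Mmat mxE.
  have [cr|rc|cr] := ltngtP c r; simp_if => //.
  all: case: (eqVneq (val r) 0%N) => r0 //; have r0' : nat_of_ord r = 0%N := r0.
  - by exfalso; lia.
  - by have /negbTE -> : val c != 0%N by change (nat_of_ord c != 0%N); lia.
  - have /eqP -> : val c == 0%N by change (nat_of_ord c == 0%N); lia.
    by rewrite r0' expr0. }
have [N [h1 h2]] : exists N : 'M[R]_n, N *m M = 1%:M /\ M *m N = 1%:M.
  apply: tri_inv => [i j lij|i]; rewrite Mval.
    by simp_if.
  by simp_if; apply: unitrX.
exists N; split => // -[|p] hi; first by lia.
have hp : (p.+1 < n)%N by lia.
have K : M *m rho n S p.+1 = rho n S' p.+1 *m M.
  apply: key => //.
  - exact: alg_a.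
  - exact: alg_b.
  - exact: alg_c.
  - exact: alg_d.
  - exact: alg_e.
by rewrite -mulmxA -K mulmxA h1 mul1mx.
Qed.
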